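(* Let $\mathcal{K}$ be a Hilbert space, let $A$ be a closable, densely defined operator in $\mathcal{K}$, let $S$ be a closed densely defined operator in $\mathcal{K}$ and let $z\in\rho(S)$. Suppose that for some $m\in\mathbb{N}$, $$\mathcal{D}(S^m)\subseteq\mathcal{D}(\bar A),\qquad \mathcal{D}(S^{*m})\subseteq\mathcal{D}(A^* ).$$ Then $\mathrm{ad}((S-z)^{-1},\bar A)=(S-z)^{-1}\bar A-\bar A(S-z)^{-1}$ is a closable densely defined operator. If it is additionally bounded, then $$\|\mathrm{ad}((S-z)^{-m},\bar A)\|\le m\,\|(S-z)^{-1}\|^{m-1}\,\|\mathrm{ad}((S-z)^{-1},\bar A)\|.$$
   Context: $\rho(S)$ is the resolvent set of $S$. For operators $S,T$, $\mathrm{ad}(S,T):=ST-TS$ with natural domains. An operator $T$ is bounded if $\|Tf\|\le c\|f\|$ for all $f\in\mathcal{D}(T)$ and some $c\ge0$; $\|T\|=\sup\{\|Tf\|:f\in\mathcal{D}(T),\|f\|\le1\}$. *)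

(* Defs.v *)
From HB Require Import structures.
From mathcomp Require Import all_boot all_order all_algebra.
From mathcomp Require Import all_classical all_reals.
From mathcomp.real_closed Require Import complex.
Set Implicit Arguments. Unset Strict Implicit. Unset Printing Implicit Defensive.
Import Order.TTheory GRing.Theory Num.Theory.
Local Open Scope ring_scope.

Section Hilbert.
Variables (R : realType) (V : lmodType R[i]) (ip : V -> V -> R[i]).

Definition is_inner_product : Prop :=
  [/\ (forall (a : R[i]) (x y w : V), ip (a *: x + y) w = a * ip x w + ip y w),
      (forall x y : V, ip x y = (ip y x)^*),
      (forall x : V, 0 <= ip x x) &
      (forall x : V, ip x x = 0 -> x = 0)].

Definition hnorm (x : V) : R := Num.sqrt (complex.Re (ip x x)).

Definition converges (u : nat -> V) (l : V) : Prop :=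
  forall e : R, 0 < e -> exists N, forall n, (N <= n)%N -> hnorm (u n - l) < e.

Definition is_cauchy (u : nat -> V) : Prop :=
  forall e : R, 0 < e -> exists N, forall m n, (N <= m)%N -> (N <= n)%N ->
    hnorm (u m - u n) < e.

Definition is_complete : Prop :=
  forall u : nat -> V, is_cauchy u -> exists l, converges u l.

Record op := Op { dom : V -> Prop ; app : V -> V }.

Definition is_lin_op (T : op) : Prop :=
  [/\ dom T 0,
      (forall (a : R[i]) x y, dom T x -> dom T y -> dom T (a *: x + y)) &
      (forall (a : R[i]) x y, dom T x -> dom T y ->
         app T (a *: x + y) = a *: app T x + app T y)].

Definition densely_defined (T : op) : Prop :=
  forall x e, 0 < e -> exists y, dom T y /\ hnorm (x - y) < e.

Definition extends (T B : op) : Prop :=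
  forall f, dom T f -> dom B f /\ app B f = app T f.

Definition is_closed (T : op) : Prop :=
  forall (u : nat -> V) x y, (forall n, dom T (u n)) ->
    converges u x -> converges (fun n => app T (u n)) y ->
    dom T x /\ app T x = y.

Definition closable (T : op) : Prop :=
  exists B, [/\ is_lin_op B, is_closed B & extends T B].

Definition is_closure (T B : op) : Prop :=
  [/\ is_lin_op B, is_closed B, extends T B &
      forall C, is_lin_op C -> is_closed C -> extends T C -> extends B C].

Definition is_adjoint (T Ts : op) : Prop :=
  (forall g, dom Ts g <-> exists h, forall f, dom T f -> ip (app T f) g = ip f h)
  /\ (forall g f, dom Ts g -> dom T f -> ip (app T f) g = ip f (app Ts g)).

Definition bounded (T : op) : Prop :=
  exists c : R, 0 <= c /\ forall f, dom T f -> hnorm (app T f) <= c * hnorm f.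

Definition op_norm (T : op) : R :=
  sup [set r : R | exists f, [/\ dom T f, hnorm f <= 1 & r = hnorm (app T f)]].

Definition op_mul (S T : op) : op :=
  Op (fun f => dom T f /\ dom S (app T f)) (fun f => app S (app T f)).

Definition op_sub (S T : op) : op :=
  Op (fun f => dom S f /\ dom T f) (fun f => app S f - app T f).

Definition op_id : op := Op (fun _ => True) id.

Fixpoint op_pow (T : op) (n : nat) : op :=
  match n with 0 => op_id | n.+1 => op_mul T (op_pow T n) end.

Definition op_shift (S : op) (z : R[i]) : op :=
  Op (dom S) (fun f => app S f - z *: f).

Definition ad (S T : op) : op := op_sub (op_mul S T) (op_mul T S).

Definition is_resolvent (S : op) (z : R[i]) (Rz : op) : Prop :=
  [/\ is_lin_op Rz, (forall f, dom Rz f), bounded Rz,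
      (forall f, dom S (app Rz f) /\ app (op_shift S z) (app Rz f) = f) &
      (forall f, dom S f -> app Rz (app (op_shift S z) f) = f)].

Definition in_resolvent_set (S : op) (z : R[i]) : Prop :=
  exists Rz, is_resolvent S z Rz.

Definition dom_sub (S T : op) : Prop := forall f, dom S f -> dom T f.

End Hilbert.

(* Main.v *)
Require Import Defs.
From HB Require Import structures.
From mathcomp Require Import all_boot all_order all_algebra.
From mathcomp Require Import all_classical all_reals.
From mathcomp.real_closed Require Import complex.
From mathcomp Require Import ring lra.
Import Order.TTheory GRing.Theory Num.Theory.
Local Open Scope ring_scope.

Set Implicit Arguments. Unset Strict Implicit. Unset Printing Implicit Defensive.

Section Basics.
Variables (R : realType) (V : lmodType R[i]) (ip : V -> V -> R[i]).
Hypothesis Hip : is_inner_product ip.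
Local Notation nrm := (hnorm ip).
Local Notation Re := complex.Re.
Local Notation Im := complex.Im.
Local Notation "x %:C" := (real_complex R x) : ring_scope.

Lemma ReD (a b : R[i]) : Re (a + b) = Re a + Re b.
Proof. by case: a => ? ?; case: b => ? ?; simpc. Qed.
Lemma ImD (a b : R[i]) : Im (a + b) = Im a + Im b.
Proof. by case: a => ? ?; case: b => ? ?; simpc. Qed.
Lemma ReN (a : R[i]) : Re (- a) = - Re a.
Proof. by case: a => ? ?; simpc. Qed.
Lemma ImN (a : R[i]) : Im (- a) = - Im a.
Proof. by case: a => ? ?; simpc. Qed.
Lemma ReB (a b : R[i]) : Re (a - b) = Re a - Re b.
Proof. by rewrite ReD ReN. Qed.
Lemma ImB (a b : R[i]) : Im (a - b) = Im a - Im b.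
Proof. by rewrite ImD ImN. Qed.
Lemma ReM (a b : R[i]) : Re (a * b) = Re a * Re b - Im a * Im b.
Proof. by case: a => ? ?; case: b => ? ?; simpc. Qed.
Lemma ImM (a b : R[i]) : Im (a * b) = Re a * Im b + Im a * Re b.
Proof. case: a => a1 a2; case: b => b1 b2; simpc; rewrite /=; ring. Qed.
Lemma ReC (t : R) : Re t%:C = t. Proof. by []. Qed.
Lemma ImC (t : R) : Im t%:C = 0. Proof. by []. Qed.
Lemma Re_conj (a : R[i]) : Re a^* = Re a. Proof. by case: a => ? ?; simpc. Qed.
Lemma Im_conj (a : R[i]) : Im a^* = - Im a. Proof. by case: a => ? ?; simpc. Qed.
Lemma c_eq (a b : R[i]) : Re a = Re b -> Im a = Im b -> a = b.
Proof. by case: a; case: b => ? ? ? ? /= -> ->. Qed.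
Lemma Re_Cmul (t : R) (a : R[i]) : Re (t%:C * a) = t * Re a.
Proof. by rewrite ReM ReC ImC mul0r subr0. Qed.
Lemma Im_Cmul (t : R) (a : R[i]) : Im (t%:C * a) = t * Im a.
Proof. by rewrite ImM ReC ImC mul0r addr0. Qed.
Lemma conjC_C (t : R) : (t%:C)^* = t%:C.
Proof. by apply: c_eq; rewrite ?Re_conj ?Im_conj //= oppr0. Qed.

Lemma conjD (a b : R[i]) : (a + b)^* = a^* + b^*.
Proof. by case: a => ? ?; case: b => ? ?; simpc. Qed.
Lemma conjN (a : R[i]) : (- a)^* = - a^*.
Proof. by case: a => ? ?; simpc. Qed.
Lemma conjM (a b : R[i]) : (a * b)^* = a^* * b^*.
Proof. case: a => ? ?; case: b => ? ?; simpc; rewrite /=. congr (_ +i* _)%C; ring. Qed.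
Lemma conjK (a : R[i]) : (a^*)^* = a.
Proof. by case: a => ? ?; simpc. Qed.
Lemma conj0 : (0 : R[i])^* = 0.
Proof. by simpc. Qed.

Lemma ipDl x y w : ip (x + y) w = ip x w + ip y w.
Proof. by case: Hip => H _ _ _; rewrite -{1}(scale1r x) H mul1r. Qed.
Lemma ip0l w : ip 0 w = 0.
Proof. have H := ipDl 0 0 w; rewrite addr0 in H. by apply: (@addrI _ (ip 0 w)); rewrite addr0 -H. Qed.
Lemma ipZl a x w : ip (a *: x) w = a * ip x w.
Proof. by case: Hip => H _ _ _; rewrite -(addr0 (a *: x)) H ip0l addr0. Qed.
Lemma ipNl x w : ip (- x) w = - ip x w.
Proof. by rewrite -scaleN1r ipZl mulN1r. Qed.
Lemma ipBl x y w : ip (x - y) w = ip x w - ip y w.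
Proof. by rewrite ipDl ipNl. Qed.
Lemma ipC x y : ip x y = (ip y x)^*.
Proof. by case: Hip. Qed.
Lemma ipDr w x y : ip w (x + y) = ip w x + ip w y.
Proof. by rewrite ipC ipDl conjD -!ipC. Qed.
Lemma ipZr w a x : ip w (a *: x) = a^* * ip w x.
Proof. by rewrite ipC ipZl conjM -ipC. Qed.
Lemma ip0r w : ip w 0 = 0.
Proof. by rewrite ipC ip0l conj0. Qed.
Lemma ipNr w x : ip w (- x) = - ip w x.
Proof. by rewrite ipC ipNl conjN -ipC. Qed.
Lemma ipBr w x y : ip w (x - y) = ip w x - ip w y.
Proof. by rewrite ipDr ipNr. Qed.

Lemma ip_ge0 x : 0 <= ip x x. Proof. by case: Hip. Qed.
Lemma Im_ipxx x : Im (ip x x) = 0.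
Proof. by have := ip_ge0 x; rewrite lecE /= => /andP [/eqP <- _]. Qed.
Lemma Re_ipxx_ge0 x : 0 <= Re (ip x x).
Proof. by have := ip_ge0 x; rewrite lecE /= => /andP [_ ]. Qed.
Lemma nrm_ge0 x : 0 <= nrm x.
Proof. exact: sqrtr_ge0. Qed.
Lemma nrm_sq x : nrm x ^+ 2 = Re (ip x x).
Proof. by rewrite /hnorm sqr_sqrtr // Re_ipxx_ge0. Qed.
Lemma ipxx x : ip x x = (nrm x ^+ 2)%:C.
Proof. by apply: c_eq; rewrite ?nrm_sq ?Im_ipxx. Qed.
Lemma nrm0_eq x : nrm x = 0 -> x = 0.
Proof. by case: Hip => _ _ _ H Hx; apply: H; rewrite ipxx Hx expr0n. Qed.
Lemma nrm0 : nrm 0 = 0.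
Proof. by rewrite /hnorm ip0l sqrtr0. Qed.


Lemma Re_ipxx x : Re (ip x x) = nrm x ^+ 2. Proof. by rewrite nrm_sq. Qed.

Lemma ip_expand x y a :
  ip (x + a *: y) (x + a *: y) = ip x x + a^* * ip x y + a * (ip x y)^* + a * a^* * ip y y.
Proof.
rewrite !ipDl !ipDr !ipZl !ipZr -(ipC y x); ring.
Qed.

Lemma nrm_expandR x y (t : R) :
  nrm (x + t%:C *: y) ^+ 2 = nrm x ^+ 2 + 2 * t * Re (ip x y) + t ^+ 2 * nrm y ^+ 2.
Proof.
rewrite -!Re_ipxx ip_expand (ipxx x) (ipxx y).
case: (ip x y) => p q; simpc; rewrite /=; ring.
Qed.

Lemma CS_Re x y : Re (ip x y) <= nrm x * nrm y.
Proof.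
have [y0|ny] := eqVneq (nrm y) 0.
  by rewrite (nrm0_eq y0) ip0r nrm0 mulr0.
have ny0 : 0 < nrm y by rewrite lt_def ny nrm_ge0.
set a := Re (ip x y); set n := nrm x; set m := nrm y.
have := nrm_expandR x y (- (a / m ^+ 2)).
have h0 := nrm_ge0 (x + (- (a / m ^+ 2))%:C *: y).
have hn := nrm_ge0 x.
move: (nrm _) h0 => u h0 Hu.
have hm2 : 0 < m ^+ 2 by rewrite exprn_gt0.
have key : a ^+ 2 <= n ^+ 2 * m ^+ 2.
  have : 0 <= n ^+ 2 + 2 * - (a / m ^+ 2) * a + (- (a / m ^+ 2)) ^+ 2 * m ^+ 2.
    by rewrite -Hu sqr_ge0.
  have -> : n ^+ 2 + 2 * - (a / m ^+ 2) * a + (- (a / m ^+ 2)) ^+ 2 * m ^+ 2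
     = (n ^+ 2 * m ^+ 2 - a ^+ 2) / m ^+ 2.
    by field; rewrite gt_eqF.
  by rewrite pmulr_lge0 ?invr_gt0 // subr_ge0.
have : 0 <= n * m by rewrite mulr_ge0 // nrm_ge0.
nra.
Qed.

Lemma nrm_i y : nrm ('i%C *: y) = nrm y.
Proof.
rewrite /hnorm ipZl ipZr mulrA (ipxx y).
by congr (Num.sqrt _); simpc; rewrite /=; ring.
Qed.

Lemma CS_Im x y : Im (ip x y) <= nrm x * nrm y.
Proof.
have := CS_Re x ('i%C *: y); rewrite nrm_i ipZr.
suff -> : Re ('i%C^* * ip x y) = Im (ip x y) by [].
by case: (ip x y) => p q; simpc; rewrite /=; ring.
Qed.

Lemma CS_Re_abs x y : `|Re (ip x y)| <= nrm x * nrm y.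
Proof.
rewrite ler_norml CS_Re andbT.
have := CS_Re (- x) y; rewrite ipNl ReN.
have -> : nrm (- x) = nrm x by rewrite /hnorm ipNl ipNr opprK.
by rewrite lerNl.
Qed.

Lemma CS_Im_abs x y : `|Im (ip x y)| <= nrm x * nrm y.
Proof.
rewrite ler_norml CS_Im andbT.
have := CS_Im (- x) y; rewrite ipNl ImN.
have -> : nrm (- x) = nrm x by rewrite /hnorm ipNl ipNr opprK.
by rewrite lerNl.
Qed.

Lemma nrmN x : nrm (- x) = nrm x.
Proof. by rewrite /hnorm ipNl ipNr opprK. Qed.

Lemma nrmB x y : nrm (x - y) = nrm (y - x).
Proof. by rewrite -nrmN opprB. Qed.

Lemma sq_le (u v : R) : 0 <= u -> 0 <= v -> u ^+ 2 <= v ^+ 2 -> u <= v.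
Proof. move=> hu hv h; nra. Qed.

Lemma sq_mono (u v : R) : 0 <= u -> u <= v -> u ^+ 2 <= v ^+ 2.
Proof. move=> hu hv; nra. Qed.

Lemma nrm_triangle x y : nrm (x + y) <= nrm x + nrm y.
Proof.
apply: sq_le; rewrite ?addr_ge0 ?nrm_ge0 //.
have := nrm_expandR x y 1; rewrite scale1r => ->.
have := CS_Re x y; nra.
Qed.

Lemma nrmZR (t : R) x : nrm (t%:C *: x) = `|t| * nrm x.
Proof.
have := nrm_expandR 0 x t; rewrite add0r nrm0 ip0l /= expr0n /= add0r mulr0 add0r.
move=> H; apply/eqP; rewrite -(@eqrXn2 _ 2) ?mulr_ge0 ?nrm_ge0 //.
by rewrite H exprMn real_normK ?num_real.
Qed.

Lemma nrm_diff x y : `|nrm x - nrm y| <= nrm (x - y).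
Proof.
have h1 := nrm_triangle (y - x) x; have h2 := nrm_triangle (x - y) y.
rewrite subrK in h1; rewrite subrK in h2; rewrite nrmB in h1.
rewrite ler_norml; apply/andP; split; lra.
Qed.


Lemma parallelogram u v :
  nrm (u + v) ^+ 2 + nrm (u - v) ^+ 2 = 2 * nrm u ^+ 2 + 2 * nrm v ^+ 2.
Proof.
have h1 := nrm_expandR u v 1; have h2 := nrm_expandR u v (-1).
rewrite scale1r in h1.
have e : (-1 : R)%:C *: v = - v.
  by rewrite rmorphN1 scaleN1r.
rewrite e in h2. rewrite h1 h2; ring.
Qed.

Lemma inv_small (e : R) : 0 < e -> exists N : nat, forall n, (N <= n)%N -> n.+1%:R^-1 < e.
Proof.
move=> e0; have [k hk] := ltr_add_invr e0; rewrite add0r in hk.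
exists k => n kn; apply: le_lt_trans hk.
rewrite lef_pV2 ?posrE ?ltr0Sn // ler_nat; by [].
Qed.

Definition subspace (L : V -> Prop) :=
  L 0 /\ forall a x y, L x -> L y -> L (a *: x + y).

Lemma subspaceN L : subspace L -> forall x, L x -> L (- x).
Proof. by case=> h0 h x Lx; rewrite -scaleN1r -(addr0 (_ *: x)); apply: h. Qed.
Lemma subspaceD L : subspace L -> forall x y, L x -> L y -> L (x + y).
Proof. by case=> h0 h x y Lx Ly; rewrite -(scale1r x); apply: h. Qed.
Lemma subspaceZ L : subspace L -> forall a x, L x -> L (a *: x).
Proof. by case=> h0 h a x Lx; rewrite -(addr0 (_ *: x)); apply: h. Qed.
Lemma subspaceB L : subspace L -> forall x y, L x -> L y -> L (x - y).
Proof. by move=> hL x y Lx Ly; apply: subspaceD => //; apply: subspaceN. Qed.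

Hypothesis Hcomplete : is_complete ip.

Lemma minimizing (L : V -> Prop) (HL : subspace L) x :
  exists d : R, exists g : nat -> V, [/\ 0 <= d, forall n, L (g n),
     forall n, nrm (x - g n) < d + n.+1%:R^-1 &
     forall l, L l -> d <= nrm (x - l)].
Proof.
pose E : set R := fun r => exists l, L l /\ r = nrm (x - l).
have hE : has_inf E.
  split; first by exists (nrm (x - 0)); exists 0; split => //; case: HL.
  by exists 0 => r [l [_ ->]]; apply: nrm_ge0.
have lb : forall l, L l -> inf E <= nrm (x - l).
  by move=> l Ll; apply: (ge_inf hE.2); exists l.
have [g Hg] : {g : nat -> V & forall n, L (g n) /\ nrm (x - g n) < inf E + n.+1%:R^-1}.
  apply: (boolp.choice (P := fun n l => L l /\ nrm (x - l) < inf E + n.+1%:R^-1)) => n.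
  have ep : 0 < (n.+1%:R^-1 : R) by rewrite invr_gt0 ltr0Sn.
  have [r [l [Ll ->]] hr] := inf_adherent ep hE.
  by exists l.
exists (inf E), g; split => //.
- by apply: lb_le_inf hE.1 _ => r [l [_ ->]]; apply: nrm_ge0.
- by move=> n; case: (Hg n).
- by move=> n; case: (Hg n).
Qed.


Lemma le_eps (a b : R) : (forall e, 0 < e -> a < b + e) -> a <= b.
Proof. by move=> h; apply/ler_addgt0Pr => e e0; apply/ltW/h. Qed.

Lemma var_formula y l (s : R) :
  nrm (y + (- (s%:C * ip y l)) *: l) ^+ 2 =
  nrm y ^+ 2 - 2 * s * (Re (ip y l) ^+ 2 + Im (ip y l) ^+ 2)
  + s ^+ 2 * (Re (ip y l) ^+ 2 + Im (ip y l) ^+ 2) * nrm l ^+ 2.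
Proof.
rewrite -!Re_ipxx ip_expand (ipxx y) (ipxx l).
case: (ip y l) => p q; simpc; rewrite /=; ring.
Qed.

Lemma variational y l : (forall t : R[i], nrm y <= nrm (y - t *: l)) -> ip y l = 0.
Proof.
move=> H.
set k := nrm l ^+ 2.
have k0 : 0 <= k by rewrite sqr_ge0.
set s := (k + 1)^-1.
have s0 : 0 < s by rewrite invr_gt0; lra.
have sk : s * k = 1 - s by rewrite /s; field; lra.
have := H (s%:C * ip y l); rewrite -scaleNr => h.
have h2 : nrm y ^+ 2 <= nrm (y + (- (s%:C * ip y l)) *: l) ^+ 2.
  have := nrm_ge0 y; nra.
rewrite var_formula -/k in h2.
set w := (Re (ip y l) ^+ 2 + Im (ip y l) ^+ 2) in h2.
have w0 : 0 <= w by rewrite /w addr_ge0 ?sqr_ge0.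
have ww : w <= 0.
  have h3 : 2 * s * w <= s ^+ 2 * w * k by lra.
  have h4 : s ^+ 2 * w * k = s * w * (1 - s) by rewrite -sk; ring.
  rewrite h4 in h3.
  have h5 : s * (w + s * w) <= 0 by nra.
  have := pmulr_rle0 _ s0; nra.
have w00 : w = 0 by lra.
have hr : Re (ip y l) = 0 by move: w00; rewrite /w; have := sqr_ge0 (Re (ip y l)); have := sqr_ge0 (Im (ip y l)); nra.
have hi : Im (ip y l) = 0 by move: w00; rewrite /w; have := sqr_ge0 (Re (ip y l)); have := sqr_ge0 (Im (ip y l)); nra.
by apply: c_eq.
Qed.


Lemma two_C : (2 : R[i]) = (2 : R)%:C.
Proof. by rewrite rmorph_nat. Qed.

Lemma projection (L : V -> Prop) (HL : subspace L) x :
  exists p, (forall e, 0 < e -> exists l, L l /\ nrm (p - l) < e) /\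
            (forall l, L l -> ip (x - p) l = 0).
Proof.
have [d [g [d0 Lg Hg lb]]] := minimizing HL x.
have cau : is_cauchy ip g.
  move=> e e0.
  pose del := Num.min 1 (e ^+ 2 / (8 * d + 8)).
  have del0 : 0 < del.
    by rewrite lt_min ltr01 /= divr_gt0 ?exprn_gt0 //; lra.
  have del1 : del <= 1 by rewrite ge_min lexx.
  have del2 : del * (8 * d + 8) <= e ^+ 2.
    have : del <= e ^+ 2 / (8 * d + 8) by rewrite ge_min lexx orbT.
    rewrite ler_pdivlMr //; lra.
  have [N HN] := inv_small del0.
  exists N => m n hm hn.
  set a := m.+1%:R^-1 : R; set b := n.+1%:R^-1 : R.
  have a0 : 0 < a by rewrite invr_gt0 ltr0Sn.
  have b0 : 0 < b by rewrite invr_gt0 ltr0Sn.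
  have ad : a < del := HN _ hm. have bd : b < del := HN _ hn.
  have hum : nrm (x - g m) < d + a := Hg m. have hun : nrm (x - g n) < d + b := Hg n.
  set w := (2 : R[i])^-1 *: (g m + g n).
  have Lw : L w by apply: subspaceZ => //; apply: subspaceD.
  have e1 : (x - g m) + (x - g n) = (2 : R)%:C *: (x - w).
    rewrite -two_C scalerBr /w scalerA mulfV; last by rewrite pnatr_eq0.
    by rewrite scale1r scaler_nat mulr2n opprD; rewrite !addrA; congr (_ + _);
       rewrite -!addrA; congr (_ + _); rewrite addrC.
  have e2 : (x - g m) - (x - g n) = g n - g m.
    by rewrite opprB addrC addrA subrK.
  have hp := parallelogram (x - g m) (x - g n).
  rewrite e1 e2 nrmZR in hp.
  have lw := lb _ Lw.
  have hm0 := nrm_ge0 (x - g m); have hn0 := nrm_ge0 (x - g n).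
  have h2 : `|(2 : R)| = 2 by rewrite ger0_norm.
  rewrite h2 in hp.
  have hw0 := nrm_ge0 (x - w).
  have hsq : nrm (g m - g n) ^+ 2 < e ^+ 2.
    rewrite nrmB.
    have hA : nrm (x - g m) ^+ 2 <= (d + a) ^+ 2 by apply: sq_mono => //; apply: ltW; apply: hum.
    have hB : nrm (x - g n) ^+ 2 <= (d + b) ^+ 2 by apply: sq_mono => //; apply: ltW; apply: hun.
    have hC : (2 * d) ^+ 2 <= (2 * nrm (x - w)) ^+ 2 by apply: sq_mono; lra.
    have hD : nrm (g n - g m) ^+ 2 <= 4 * d * a + 2 * a ^+ 2 + 4 * d * b + 2 * b ^+ 2 by nra.
    have ha2 : a ^+ 2 <= a by nra.
    have hb2 : b ^+ 2 <= b by nra.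
    have hE : (4 * d + 2) * (a + b) < (4 * d + 2) * (2 * del) by rewrite ltr_pM2l; lra.
    nra.
  have := nrm_ge0 (g m - g n); nra.
have [p Hp] := Hcomplete cau.
exists p; split.
  move=> e e0; have [N HN] := Hp e e0; exists (g N); split => //.
  by rewrite nrmB; apply: HN.
have xp : nrm (x - p) <= d.
  apply: le_eps => e e0.
  have e20 : 0 < e / 2 by rewrite divr_gt0.
  have [N HN] := Hp _ e20.
  have [M HM] := inv_small e20.
  set n := maxn N M.
  have h1 := HN n (leq_maxl _ _); have h2 := HM n (leq_maxr _ _).
  have h3 := nrm_triangle (x - g n) (g n - p).
  rewrite addrA subrK in h3.
  have h4 := Hg n.
  move: h1 h2 h3 h4; set q := n.+1%:R^-1; move: (nrm (x - p)) (nrm (g n - p)) (nrm (x - g n)) => u v w; clear; move: e => e; lra.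
move=> l Ll; apply: variational => t.
apply: (le_trans xp); apply: le_eps => e e0.
have [N HN] := Hp e e0.
have Lgt : L (g N + t *: l) by apply: subspaceD => //; apply: subspaceZ.
have h1 := lb _ Lgt.
have h2 := nrm_diff (x - (g N + t *: l)) (x - p - t *: l).
have e3 : x - (g N + t *: l) - (x - p - t *: l) = p - g N.
  by rewrite !opprD !opprK addrACA addNKr subrK.
rewrite e3 in h2.
have h3 := HN N (leqnn N); rewrite nrmB in h3.
move: h2; rewrite ler_norml => /andP [h4 h5].
lra.
Qed.


Lemma perp_dense (L : V -> Prop) (HL : subspace L) :
  (forall y, (forall l, L l -> ip y l = 0) -> y = 0) ->
  forall x e, 0 < e -> exists l, L l /\ nrm (x - l) < e.
Proof.
move=> Hperp x e e0; have [p [Hp Hq]] := projection HL x.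
have xp : x - p = 0 by apply: Hperp.
by move/eqP: xp; rewrite subr_eq0 => /eqP ->; apply: Hp.
Qed.

Lemma small_zero (a c : R) : 0 <= c -> (forall e, 0 < e -> `|a| <= c * e) -> a = 0.
Proof.
move=> c0 H; apply/eqP; rewrite -normr_le0; apply: le_eps => e e0.
rewrite add0r.
have e1 : 0 < e / (c + 1) by rewrite divr_gt0 //; lra.
have := H _ e1.
have : c * (e / (c + 1)) < e.
  rewrite mulrA ltr_pdivrMr; last lra.
  nra.
lra.
Qed.

Lemma riesz (phi : V -> R[i]) (c : R) :
  (forall a x y, phi (a *: x + y) = a * phi x + phi y) ->
  0 <= c ->
  (forall f, `|Re (phi f)| <= c * nrm f /\ `|Im (phi f)| <= c * nrm f) ->
  exists h, forall f, phi f = ip f h.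
Proof.
move=> Hlin c0 Hb.
have phi0 : phi 0 = 0.
  have := Hlin 1 0 0; rewrite scale1r addr0 mul1r.
  move=> H; apply: (@addrI _ (phi 0)); by rewrite addr0 -H.
have phiZ a x : phi (a *: x) = a * phi x by rewrite -(addr0 (a *: x)) Hlin phi0 addr0.
have phiD x y : phi (x + y) = phi x + phi y by rewrite -{1}(scale1r x) Hlin mul1r.
have phiB x y : phi (x - y) = phi x - phi y by rewrite phiD -scaleN1r phiZ mulN1r.
have [Hall|[y0 Hy0]] : (forall f, phi f = 0) \/ exists y0, phi y0 <> 0.
  case: (boolp.EM (exists y0, phi y0 <> 0)) => [h|h]; [by right|left].
  by move=> f; apply: boolp.contrapT => hf; apply: h; exists f.
  by exists 0 => f; rewrite Hall ip0r.
pose N := fun f => phi f = 0.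
have HN : subspace N.
  split; first by rewrite /N phi0.
  by move=> a x y; rewrite /N Hlin => -> ->; rewrite mulr0 addr0.
have [p [Hp Hq]] := projection HN y0.
have phip : phi p = 0.
  have hre : Re (phi p) = 0.
    apply: (small_zero c0) => e e0; have [l [Nl hl]] := Hp e e0.
    have : phi p = phi (p - l) by rewrite phiB Nl subr0.
    move=> ->; case: (Hb (p - l)) => h1 _.
    by apply: (le_trans h1); apply: ler_wpM2l => //; apply: ltW.
  have him : Im (phi p) = 0.
    apply: (small_zero c0) => e e0; have [l [Nl hl]] := Hp e e0.
    have : phi p = phi (p - l) by rewrite phiB Nl subr0.
    move=> ->; case: (Hb (p - l)) => _ h1.
    by apply: (le_trans h1); apply: ler_wpM2l => //; apply: ltW.
  by apply: c_eq.
set q := y0 - p.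
have phiq : phi q = phi y0 by rewrite /q phiB phip subr0.
have qq : ip q q != 0.
  apply/eqP => h0; apply: Hy0; rewrite -phiq.
  by case: Hip => _ _ _ /(_ q h0) ->.
have phiq0 : phi q != 0 by rewrite phiq; apply/eqP.
exists ((phi q / ip q q)^* *: q) => f.
rewrite ipZr conjK.
have H1 : ip q (f - (phi f / phi q) *: q) = 0.
  apply: Hq; rewrite /N phiB phiZ mulfVK //; by rewrite subrr.
move/eqP: H1; rewrite ipBr ipZr subr_eq0 => /eqP H1.
have H2 : ip f q = (phi f / phi q) * ip q q.
  move: H1; set k := phi f / phi q => H1.
  by rewrite ipC H1 conjM conjK -ipC.
by rewrite H2; field; apply/andP; split.
Qed.


Lemma lin0 (T : op V) : is_lin_op T -> app T 0 = 0.
Proof.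
case=> d0 _ hl; have := hl 1 0 0 d0 d0; rewrite scale1r addr0 scale1r => H.
by apply: (@addrI _ (app T 0)); rewrite addr0 -H.
Qed.

Lemma linZ (T : op V) : is_lin_op T -> forall a x, dom T x -> app T (a *: x) = a *: app T x.
Proof.
move=> hT a x dx; case: (hT) => d0 _ hl.
by rewrite -(addr0 (a *: x)) hl // lin0 // addr0.
Qed.

Lemma domZ (T : op V) : is_lin_op T -> forall a x, dom T x -> dom T (a *: x).
Proof. by case=> d0 hd _ a x dx; rewrite -(addr0 (a *: x)); apply: hd. Qed.

Lemma nrm_unit f : nrm f != 0 -> nrm ((nrm f)^-1%:C *: f) = 1.
Proof.
move=> h; rewrite nrmZR ger0_norm ?invr_ge0 ?nrm_ge0 // mulVf //.
Qed.

Lemma opn_has_sup (T : op V) : is_lin_op T -> bounded ip T ->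
  has_sup [set r : R | exists f, [/\ dom T f, nrm f <= 1 & r = nrm (app T f)]]%classic.
Proof.
move=> hT [c [c0 hc]]; split.
  by exists (nrm (app T 0)), 0; split => //; [case: hT | rewrite nrm0 ler01].
exists c => r [f [df f1 ->]]; apply: (le_trans (hc f df)).
by rewrite -{2}(mulr1 c); apply: ler_wpM2l.
Qed.

Lemma opn_ge0 (T : op V) : is_lin_op T -> bounded ip T -> 0 <= op_norm ip T.
Proof.
move=> hT hb; apply: (le_trans _ (sup_upper_bound (opn_has_sup hT hb) _)).
  exact: (nrm_ge0 (app T 0)).
by exists 0; split => //; [case: hT | rewrite nrm0 ler01].
Qed.

Lemma opn_bound (T : op V) : is_lin_op T -> bounded ip T ->
  forall f, dom T f -> nrm (app T f) <= op_norm ip T * nrm f.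
Proof.
move=> hT hb f df.
have [f0|fn] := eqVneq (nrm f) 0.
  by rewrite (nrm0_eq f0) lin0 // nrm0 mulr0.
have hs := sup_upper_bound (opn_has_sup hT hb).
have fp : 0 < nrm f by rewrite lt_def fn nrm_ge0.
set g := (nrm f)^-1%:C *: f.
have Hg : [set r : R | exists f, [/\ dom T f, nrm f <= 1 & r = nrm (app T f)]]%classic (nrm (app T g)).
  exists g; split => //; first by apply: domZ.
  by rewrite nrm_unit.
have := hs _ Hg; rewrite /g linZ // nrmZR ger0_norm ?invr_ge0 ?nrm_ge0 //.
by rewrite mulrC ler_pdivrMr // mulrC.
Qed.

Lemma opn_le (T : op V) (C : R) : dom T 0 -> 0 <= C ->
  (forall f, dom T f -> nrm (app T f) <= C * nrm f) -> op_norm ip T <= C.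
Proof.
move=> d0 C0 H; apply: ge_sup.
  by exists (nrm (app T 0)), 0; split => //; rewrite nrm0 ler01.
move=> r [f [df f1 ->]]; apply: (le_trans (H f df)).
by rewrite -{2}(mulr1 C); apply: ler_wpM2l.
Qed.

Lemma ip_eq_all (a b : V) : (forall f, ip f a = ip f b) -> a = b.
Proof.
move=> H; apply/eqP; rewrite -subr_eq0; apply/eqP; apply: nrm0_eq.
have : ip (a - b) (a - b) = 0 by rewrite ipBr H subrr.
rewrite ipxx => /(congr1 (fun z => Re z)) /= /eqP.
by rewrite sqrf_eq0 => /eqP.
Qed.

Lemma perp_zero (L : V -> Prop) :
  (forall x e, 0 < e -> exists l, L l /\ nrm (x - l) < e) ->
  forall w, (forall l, L l -> ip l w = 0) -> w = 0.
Proof.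
move=> Hd w Hw; apply: nrm0_eq.
have : nrm w ^+ 2 = 0.
  apply: (small_zero (nrm_ge0 w)) => e e0.
  have [l [Ll hl]] := Hd w e e0.
  have e1 : ip w w = ip (w - l) w by rewrite ipBl (Hw l Ll) subr0.
  rewrite ger0_norm ?sqr_ge0 // -Re_ipxx e1.
  apply: (le_trans (CS_Re _ _)); rewrite mulrC; apply: ler_wpM2l; first exact: nrm_ge0.
  exact: ltW.
by move/eqP; rewrite sqrf_eq0 => /eqP.
Qed.

Lemma lim_ip (u v : nat -> V) x y h k :
  converges ip u x -> converges ip v y ->
  (forall n, ip (v n) h = ip (u n) k) -> ip y h = ip x k.
Proof.
move=> cu cv H.
have key n : ip y h - ip x k = ip (y - v n) h - ip (x - u n) k.
  by rewrite ipBl ipBl H opprB addrA subrK addrC.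
have c0 : 0 <= nrm h + nrm k by rewrite addr_ge0 ?nrm_ge0.
apply/eqP; rewrite -subr_eq0; apply/eqP; apply: c_eq.
  apply: (small_zero c0) => e e0.
  have [N1 H1] := cu e e0; have [N2 H2] := cv e e0.
  set n := maxn N1 N2.
  have h1 := H1 n (leq_maxl _ _); have h2 := H2 n (leq_maxr _ _).
  rewrite (key n) ReB.
  have a1 := CS_Re_abs (y - v n) h; have a2 := CS_Re_abs (x - u n) k.
  rewrite nrmB in a1; rewrite nrmB in a2.
  have b1 : nrm (v n - y) * nrm h <= e * nrm h by apply: ler_wpM2r; [exact: nrm_ge0|exact: ltW].
  have b2 : nrm (u n - x) * nrm k <= e * nrm k by apply: ler_wpM2r; [exact: nrm_ge0|exact: ltW].
  apply: (le_trans (ler_normB _ _)); rewrite /=; lra.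
apply: (small_zero c0) => e e0.
have [N1 H1] := cu e e0; have [N2 H2] := cv e e0.
set n := maxn N1 N2.
have h1 := H1 n (leq_maxl _ _); have h2 := H2 n (leq_maxr _ _).
rewrite (key n) ImB.
have a1 := CS_Im_abs (y - v n) h; have a2 := CS_Im_abs (x - u n) k.
rewrite nrmB in a1; rewrite nrmB in a2.
have b1 : nrm (v n - y) * nrm h <= e * nrm h by apply: ler_wpM2r; [exact: nrm_ge0|exact: ltW].
have b2 : nrm (u n - x) * nrm k <= e * nrm k by apply: ler_wpM2r; [exact: nrm_ge0|exact: ltW].
apply: (le_trans (ler_normB _ _)); rewrite /=; lra.
Qed.

Lemma bound_by_test (L : V -> Prop) v (K : R) :
  (forall x e, 0 < e -> exists l, L l /\ nrm (x - l) < e) -> 0 <= K ->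
  (forall l, L l -> Re (ip l v) <= K * nrm l) -> nrm v <= K.
Proof.
move=> Hd K0 H.
have hv : nrm v ^+ 2 <= K * nrm v.
  apply: le_eps => e e0.
  have e1 : 0 < e / (nrm v + K + 1) by rewrite divr_gt0 //; have := nrm_ge0 v; lra.
  have [l [Ll hl]] := Hd v _ e1.
  have t1 : Re (ip v v) = Re (ip (v - l) v) + Re (ip l v) by rewrite ipBl ReB; ring.
  have t2 := CS_Re (v - l) v.
  have t3 := H l Ll.
  have t4 := nrm_triangle (l - v) v; rewrite subrK in t4.
  rewrite nrmB in t4.
  rewrite Re_ipxx in t1.
  have n0 := nrm_ge0 v; have l0 := nrm_ge0 (v - l).
  set a := e / (nrm v + K + 1) in e1 hl.
  have ha : a * (nrm v + K + 1) = e by rewrite /a mulfVK //; lra.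
  have t5 : nrm (v - l) * nrm v <= a * nrm v by apply: ler_wpM2r => //; apply: ltW.
  have t6 : K * nrm l <= K * (a + nrm v) by apply: ler_wpM2l => //; lra.
  nra.
have n0 := nrm_ge0 v.
have [v0|vp] := eqVneq (nrm v) 0; first by rewrite v0.
have : 0 < nrm v by rewrite lt_def vp n0.
nra.
Qed.


Variables (A Abar Astar S Sstar Rz : op V) (z : R[i]) (m : nat).
Hypothesis HAbar : is_closure ip A Abar.
Hypothesis HAstar : is_adjoint ip A Astar.
Hypothesis HS : is_lin_op S.
Hypothesis HSdense : densely_defined ip S.
Hypothesis HSstar : is_adjoint ip S Sstar.
Hypothesis HRz : is_resolvent ip S z Rz.
Hypothesis HdomS : dom_sub (op_pow S m) Abar.
Hypothesis HdomSstar : dom_sub (op_pow Sstar m) Astar.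

Lemma Abar_adj f0 h0 : dom Abar f0 -> dom Astar h0 ->
  ip (app Abar f0) h0 = ip f0 (app Astar h0).
Proof.
case: HAbar => linB clB extB minB.
pose C := Op (fun f => dom Abar f /\ forall h, dom Astar h ->
   ip (app Abar f) h = ip f (app Astar h)) (app Abar).
have linC : is_lin_op C.
  case: (linB) => d0 dl al; split.
  - by split => // h dh; rewrite lin0 // !ip0l.
  - move=> a x y [dx hx] [dy hy]; split; first by apply: dl.
    by move=> h dh; rewrite /= al // ipDl ipZl hx // hy // ipDl ipZl.
  - by move=> a x y [dx _] [dy _]; apply: al.
have clC : is_closed ip C.
  move=> u x y du cu cv.
  have [dx ex] := clB u x y (fun n => (du n).1) cu cv.
  split => //; split => // h dh; rewrite ex.
  by apply: (lim_ip cu cv) => n; apply: (du n).2 h dh.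
have extC : extends A C.
  move=> f df; have [dbf ebf] := extB f df; split => //=.
  by split => // h dh; rewrite ebf; apply: HAstar.2 h f dh df.
move=> df dh; have [[_ H] _] := minB C linC clC extC f0 df; exact: H.
Qed.

Lemma Rz_dom f : dom Rz f. Proof. by case: HRz. Qed.

Lemma Rz_lin a x y : app Rz (a *: x + y) = a *: app Rz x + app Rz y.
Proof. by case: HRz => [[_ _ hl] _ _ _ _]; apply: hl; apply: Rz_dom. Qed.

Lemma Rz_Z a x : app Rz (a *: x) = a *: app Rz x.
Proof. by case: HRz => hl _ _ _ _; apply: linZ => //; apply: Rz_dom. Qed.

Lemma Rz_B x y : app Rz (x - y) = app Rz x - app Rz y.
Proof. by rewrite -scaleN1r -{1}(scale1r x) addrC Rz_lin Rz_Z scale1r scaleN1r addrC. Qed.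

Lemma S_Rz g : dom S (app Rz g) /\ app S (app Rz g) = g + z *: app Rz g.
Proof.
case: HRz => _ _ _ H _; have [d e] := H g; split => //.
by move: e => /= e; rewrite -[X in _ = X + _]e subrK.
Qed.


Lemma Rz_S f : dom S f -> app Rz (app S f) = f + z *: app Rz f.
Proof.
case: HRz => _ _ _ _ H df; have := H f df => /=.
by rewrite Rz_B Rz_Z => e; rewrite -[X in _ = X + _]e subrK.
Qed.

Lemma Rz_bound f : nrm (app Rz f) <= op_norm ip Rz * nrm f.
Proof. by case: HRz => hl _ hb _ _; apply: opn_bound => //; apply: Rz_dom. Qed.

Lemma r_ge0 : 0 <= op_norm ip Rz.
Proof. by case: HRz => hl _ hb _ _; apply: opn_ge0. Qed.

Lemma Rs_ex g : exists h, forall f, ip (app Rz f) g = ip f h.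
Proof.
apply: (@riesz (fun f => ip (app Rz f) g) (op_norm ip Rz * nrm g)).
- by move=> a x y; rewrite Rz_lin ipDl ipZl.
- by rewrite mulr_ge0 ?nrm_ge0 ?r_ge0.
- move=> f; split.
  + apply: (le_trans (CS_Re_abs _ _)).
    rewrite mulrAC; apply: ler_wpM2r; [exact: nrm_ge0| exact: Rz_bound].
  + apply: (le_trans (CS_Im_abs _ _)).
    rewrite mulrAC; apply: ler_wpM2r; [exact: nrm_ge0| exact: Rz_bound].
Qed.

Definition Rs : V -> V := projT1 (boolp.choice Rs_ex).

Lemma RsP f g : ip (app Rz f) g = ip f (Rs g).
Proof. exact: (projT2 (boolp.choice Rs_ex) g f). Qed.

Lemma Rs_lin a x y : Rs (a *: x + y) = a *: Rs x + Rs y.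
Proof.
apply: ip_eq_all => f; by rewrite -RsP ipDr ipZr ipDr ipZr -!RsP.
Qed.

Lemma Rs_B x y : Rs (x - y) = Rs x - Rs y.
Proof.
rewrite -scaleN1r -{1}(scale1r x) addrC Rs_lin addrC.
by rewrite -(addr0 (1 *: x)) Rs_lin (_ : Rs 0 = 0) ?scale1r ?scaleN1r ?addr0 //;
   apply: ip_eq_all => f; rewrite -RsP !ip0r.
Qed.

Lemma Rs0 : Rs 0 = 0.
Proof. by apply: ip_eq_all => f; rewrite -RsP !ip0r. Qed.

Lemma Rs_bound g : nrm (Rs g) <= op_norm ip Rz * nrm g.
Proof.
have r0 := r_ge0.
have h1 : nrm (Rs g) ^+ 2 <= op_norm ip Rz * nrm (Rs g) * nrm g.
  rewrite -Re_ipxx -RsP.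
  apply: (le_trans (CS_Re _ _)); apply: ler_wpM2r; [exact: nrm_ge0| exact: Rz_bound].
have n0 := nrm_ge0 (Rs g); have n1 := nrm_ge0 g.
have [v0|vp] := eqVneq (nrm (Rs g)) 0; first by rewrite v0 mulr_ge0.
have : 0 < nrm (Rs g) by rewrite lt_def vp n0.
nra.
Qed.

Lemma uniq_domS a b : (forall f, dom S f -> ip f a = ip f b) -> a = b.
Proof.
move=> H; apply/eqP; rewrite -subr_eq0; apply/eqP.
apply: (perp_zero (L := dom S)); first by move=> x e e0; have [y [dy hy]] := HSdense x e0; exists y.
by move=> l dl; rewrite ipBr H // subrr.
Qed.

Lemma Sstar_Rs g : dom Sstar (Rs g) /\ app Sstar (Rs g) = g + z^* *: Rs g.
Proof.
have key f : dom S f -> ip (app S f) (Rs g) = ip f (g + z^* *: Rs g).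
  move=> df; rewrite -RsP Rz_S // ipDl ipZl RsP ipDr ipZr conjK.
  by [].
have d : dom Sstar (Rs g) by apply/HSstar.1; exists (g + z^* *: Rs g).
split => //; apply: uniq_domS => f df.
by rewrite -(HSstar.2 _ _ d df) key.
Qed.

Lemma Rz_inj g : app Rz g = 0 -> g = 0.
Proof.
move=> h; have [_ e] := S_Rz g; rewrite h scaler0 addr0 lin0 // in e.
Qed.

Lemma Sstar0 : dom Sstar 0 /\ app Sstar 0 = 0.
Proof.
have d : dom Sstar 0 by apply/HSstar.1; exists 0 => f _; rewrite !ip0r.
split => //; apply: uniq_domS => f df.
by rewrite -(HSstar.2 _ _ d df) !ip0r.
Qed.

Lemma Rs_inj g : Rs g = 0 -> g = 0.
Proof.
move=> h; have [_ e] := Sstar_Rs g; rewrite h scaler0 addr0 in e.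
by rewrite -e Sstar0.2.
Qed.


Lemma iter_lin (Q : V -> V) (HQ : forall a x y, Q (a *: x + y) = a *: Q x + Q y) n a x y :
  iter n Q (a *: x + y) = a *: iter n Q x + iter n Q y.
Proof. by elim: n => //= n ->; rewrite HQ. Qed.

Lemma pow_app (T : op V) n f : app (op_pow T n) f = iter n (app T) f.
Proof. by elim: n => //= n ->. Qed.

Lemma pow_dom_Rz n f : dom (op_pow Rz n) f.
Proof. by elim: n f => //= n IH f; split => //; apply: Rz_dom. Qed.

Lemma pow_dom_gen (T : op V) (Q : V -> V) (w : R[i])
  (HQl : forall a x y, Q (a *: x + y) = a *: Q x + Q y)
  (HQ : forall g, dom T (Q g) /\ app T (Q g) = g + w *: Q g) :
  forall k n g, (k <= n)%N -> dom (op_pow T k) (iter n Q g) /\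
     exists h, app (op_pow T k) (iter n Q g) = iter (n - k) Q h.
Proof.
elim=> [|k IH] n g hk.
  by split => //; exists g; rewrite subn0.
have [d [h e]] := IH n g (ltnW hk).
have nk : (n - k = (n - k.+1).+1)%N by rewrite subnSK.
rewrite nk /= in e.
have [dQ eQ] := HQ (iter (n - k.+1) Q h).
split; first by split => //; rewrite e.
exists (w *: Q h + h).
rewrite /= e eQ iter_lin // -iterSr /= addrC.
by [].
Qed.

Lemma Rz_dom_Abar n g : (m <= n)%N -> dom Abar (iter n (app Rz) g).
Proof.
move=> hn; apply: HdomS.
have := @pow_dom_gen S (app Rz) z Rz_lin S_Rz m n g hn; by case.
Qed.

Lemma Rs_dom_Astar n g : (m <= n)%N -> dom Astar (iter n Rs g).
Proof.
move=> hn; apply: HdomSstar.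
have := @pow_dom_gen Sstar Rs z^* Rs_lin Sstar_Rs m n g hn; by case.
Qed.

Lemma iter_adj n f g : ip (iter n (app Rz) f) g = ip f (iter n Rs g).
Proof.
elim: n g => //= n IH g; rewrite RsP IH.
by rewrite -iterSr.
Qed.

Lemma iter_Rz_inj n g : iter n (app Rz) g = 0 -> g = 0.
Proof. by elim: n g => //= n IH g /Rz_inj /IH. Qed.

Lemma iter_Rs_inj n g : iter n Rs g = 0 -> g = 0.
Proof. by elim: n g => //= n IH g /Rs_inj /IH. Qed.


Definition LR := fun f => exists g, f = iter m (app Rz) g.
Definition G := fun g => exists h, g = iter m Rs h.

Lemma LR_sub : subspace LR.
Proof.
split; first by exists 0; elim: m => //= n <-; case: HRz => hl _ _ _ _; rewrite lin0.
move=> a x y [gx ->] [gy ->]; exists (a *: gx + gy); by rewrite iter_lin //; apply: Rz_lin.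
Qed.

Lemma G_sub : subspace G.
Proof.
split; first by exists 0; elim: m => //= n <-; rewrite Rs0.
move=> a x y [gx ->] [gy ->]; exists (a *: gx + gy); by rewrite iter_lin //; apply: Rs_lin.
Qed.

Lemma ipxx0 x : ip x x = 0 -> x = 0.
Proof. by case: Hip => _ _ _; apply. Qed.

Lemma LR_dense x e : 0 < e -> exists l, LR l /\ nrm (x - l) < e.
Proof.
apply: perp_dense LR_sub _ x e => y Hy.
have h g : ip g (iter m Rs y) = 0.
  by rewrite -iter_adj ipC Hy ?conj0 //; exists g.
by apply: (@iter_Rs_inj m); apply: ipxx0; apply: h.
Qed.

Lemma G_perp y : (forall l, G l -> ip y l = 0) -> y = 0.
Proof.
move=> Hy.
have h g : ip (iter m (app Rz) y) g = 0.
  by rewrite iter_adj Hy //; exists g.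
by apply: (@iter_Rz_inj m); apply: ipxx0; apply: h.
Qed.

Lemma G_dense x e : 0 < e -> exists l, G l /\ nrm (x - l) < e.
Proof. exact: perp_dense G_sub G_perp x e. Qed.

Lemma LR_dom_ad f : LR f -> dom (ad Rz Abar) f.
Proof.
case=> g ->; split; split; try apply: Rz_dom.
- by apply: Rz_dom_Abar.
- by rewrite -iterS; apply: Rz_dom_Abar; apply: leqW.
Qed.

Lemma G_dom g : G g -> dom Astar g /\ dom Astar (Rs g).
Proof.
case=> h ->; split; first by apply: Rs_dom_Astar.
by rewrite -iterS; apply: Rs_dom_Astar; apply: leqW.
Qed.

Definition M g := app Astar (Rs g) - Rs (app Astar g).

Lemma ad_test p g : dom (ad Rz Abar) p -> G g ->
  ip (app (ad Rz Abar) p) g = ip p (M g).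
Proof.
case=> [[dAp _] [_ dARp]] Gg; have [d1 d2] := G_dom Gg.
rewrite /= ipBl RsP (Abar_adj dAp d2) (Abar_adj dARp d1) RsP.
by rewrite /M ipBr.
Qed.

Definition Bdom x := exists y, forall g, G g -> ip y g = ip x (M g).
Definition Bapp x : V :=
  match boolp.pselect (Bdom x) with
  | left H => projT1 (boolp.cid H)
  | right _ => 0
  end.

Lemma B_uniq x y1 y2 : (forall g, G g -> ip y1 g = ip x (M g)) ->
  (forall g, G g -> ip y2 g = ip x (M g)) -> y1 = y2.
Proof.
move=> h1 h2; apply/eqP; rewrite -subr_eq0; apply/eqP; apply: G_perp => l Gl.
by rewrite ipBl h1 // h2 // subrr.
Qed.

Lemma BappP x : Bdom x -> forall g, G g -> ip (Bapp x) g = ip x (M g).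
Proof.
rewrite /Bapp; case: boolp.pselect => // H _.
exact: (projT2 (boolp.cid H)).
Qed.

Lemma Bapp_eq x y : (forall g, G g -> ip y g = ip x (M g)) -> Bapp x = y.
Proof. by move=> H; apply: (B_uniq (BappP (ex_intro _ y H))). Qed.

Lemma part1 : closable ip (ad Rz Abar) /\ densely_defined ip (ad Rz Abar).
Proof.
split; last first.
  move=> x e e0; have [l [Ll hl]] := LR_dense x e0; exists l; split => //.
  exact: LR_dom_ad.
exists (Op Bdom Bapp); split.
- split.
  + by exists 0 => g _; rewrite !ip0l.
  + move=> a x y [yx hx] [yy hy]; exists (a *: yx + yy) => g Gg.
    by rewrite !ipDl !ipZl hx // hy.
  + move=> a x y dx dy /=; apply: Bapp_eq => g Gg.
    by rewrite !ipDl !ipZl !BappP.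
- move=> u x y du cu cv.
  have Hy : forall g, G g -> ip y g = ip x (M g).
    by move=> g Gg; apply: (lim_ip cu cv) => n; apply: BappP => //; apply: du.
  by split; [exists y | apply: Bapp_eq].
- move=> f df; have Hf : forall g, G g -> ip (app (ad Rz Abar) f) g = ip f (M g).
    by move=> g Gg; apply: ad_test.
  by split; [exists (app (ad Rz Abar) f) | apply: Bapp_eq].
Qed.


Lemma Abar_lin : is_lin_op Abar. Proof. by case: HAbar. Qed.

Lemma ad_lin : is_lin_op (ad Rz Abar).
Proof.
have [d0 dl al] := Abar_lin.
have hl : is_lin_op Rz by case: HRz.
split.
- split; split; try apply: Rz_dom; rewrite ?lin0 //.
- move=> a x y [[dx _] [_ dRx]] [[dy _] [_ dRy]]; split; split; try apply: Rz_dom.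
  + by apply: dl.
  + by rewrite Rz_lin; apply: dl.
- move=> a x y [[dx _] [_ dRx]] [[dy _] [_ dRy]] /=.
  rewrite al // Rz_lin Rz_lin al //.
  by rewrite scalerBr addrACA -opprD.
Qed.

Lemma G_iter k g : G g -> G (iter k Rs g).
Proof. by case=> h ->; exists (iter k Rs h); rewrite -!iterD addnC. Qed.

Lemma Rs_iter_bound k g : nrm (iter k Rs g) <= op_norm ip Rz ^+ k * nrm g.
Proof.
elim: k => [|k IH] /=; first by rewrite expr0 mul1r.
apply: (le_trans (Rs_bound _)); rewrite exprS -mulrA.
by apply: ler_wpM2l => //; apply: r_ge0.
Qed.

Definition D k g := app Astar (iter k Rs g) - iter k Rs (app Astar g).

Lemma D_rec k g : D k.+1 g = M (iter k Rs g) + Rs (D k g).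
Proof. by rewrite /D /M Rs_B /= addrA subrK. Qed.

Section Part2.
Hypothesis Hb : bounded ip (ad Rz Abar).

Lemma Nn_ge0 : 0 <= op_norm ip (ad Rz Abar).
Proof. exact: opn_ge0 ad_lin Hb. Qed.

Lemma M_bound g : G g -> nrm (M g) <= op_norm ip (ad Rz Abar) * nrm g.
Proof.
move=> Gg; apply: (bound_by_test (L := LR)).
- by move=> x e e0; apply: LR_dense.
- by rewrite mulr_ge0 ?nrm_ge0 ?Nn_ge0.
- move=> l Ll; have dl := LR_dom_ad Ll.
  rewrite -ad_test //; apply: (le_trans (CS_Re _ _)).
  rewrite mulrAC; apply: ler_wpM2r; first exact: nrm_ge0.
  exact: opn_bound ad_lin Hb _ dl.
Qed.

Lemma D_bound k g : G g ->
  nrm (D k g) <= k%:R * op_norm ip Rz ^+ k.-1 * op_norm ip (ad Rz Abar) * nrm g.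
Proof.
move=> Gg; set r := op_norm ip Rz; set N := op_norm ip (ad Rz Abar).
have r0 : 0 <= r := r_ge0; have N0 : 0 <= N := Nn_ge0; have g0 := nrm_ge0 g.
elim: k => [|k IH].
  by rewrite /D /= subrr nrm0 !mul0r.
rewrite D_rec; apply: (le_trans (nrm_triangle _ _)).
have h1 := M_bound (G_iter k Gg).
have h2 := Rs_iter_bound k g.
have h3 := Rs_bound (D k g).
have h4 : N * nrm (iter k Rs g) <= N * (r ^+ k * nrm g) by apply: ler_wpM2l.
have h5 : r * nrm (D k g) <= r * (k%:R * r ^+ k.-1 * N * nrm g) by apply: ler_wpM2l.
have e : forall j : nat, r * (j%:R * r ^+ j.-1 * N * nrm g) = j%:R * r ^+ j * N * nrm g.
  case => [|j]; first by rewrite !mul0r mulr0.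
  by rewrite /= exprS; ring.
rewrite e in h5.
have H := lerD (le_trans h1 h4) (le_trans h3 h5).
apply: (le_trans H); rewrite le_eqVlt; apply/orP; left; apply/eqP.
rewrite [in RHS]/= -addn1 natrD; ring.
Qed.

Lemma part2 : bounded ip (ad (op_pow Rz m) Abar) /\
  op_norm ip (ad (op_pow Rz m) Abar)
    <= m%:R * op_norm ip Rz ^+ (m - 1) * op_norm ip (ad Rz Abar).
Proof.
set C := m%:R * op_norm ip Rz ^+ (m - 1) * op_norm ip (ad Rz Abar).
have C0 : 0 <= C by rewrite /C !mulr_ge0 ?ler0n ?exprn_ge0 ?r_ge0 ?Nn_ge0.
have key f : dom (ad (op_pow Rz m) Abar) f ->
    nrm (app (ad (op_pow Rz m) Abar) f) <= C * nrm f.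
  move=> [[dAf _] [_ dARf]].
  rewrite pow_app in dARf.
  apply: (bound_by_test (L := G)).
  - by move=> x e e0; apply: G_dense.
  - by rewrite mulr_ge0 ?nrm_ge0.
  move=> l Gl.
  have [d1 _] := G_dom (G_iter m Gl); have [d2 _] := G_dom Gl.
  rewrite ipC Re_conj /= !pow_app ipBl iter_adj (Abar_adj dAf d1) (Abar_adj dARf d2).
  rewrite iter_adj -ipBr.
  apply: (le_trans (CS_Re _ _)).
  have := D_bound m Gl; rewrite /D => h.
  rewrite /C subn1 [_ * nrm f]mulrC -!mulrA; apply: ler_wpM2l; first exact: nrm_ge0.
  by rewrite !mulrA.
split; first by exists C; split.
apply: opn_le => //.
have [d0 _ _] := Abar_lin; have hl : is_lin_op Rz by case: HRz.
split; split => //; try apply: pow_dom_Rz.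
rewrite pow_app; suff -> : iter m (app Rz) 0 = 0 by [].
by elim: m => //= n ->; rewrite lin0.
Qed.

End Part2.

End Basics.

Theorem lemma9 (R : realType) (K : lmodType R[i]) (ip : K -> K -> R[i])
  (Hip : is_inner_product ip) (Hcomplete : is_complete ip)
  (A Abar Astar : op K) (S Sstar Rz : op K) (z : R[i]) (m : nat)
  (HA : is_lin_op A) (HAcl : closable ip A) (HAdense : densely_defined ip A)
  (HAbar : is_closure ip A Abar) (HAstar : is_adjoint ip A Astar)
  (HS : is_lin_op S) (HScl : is_closed ip S) (HSdense : densely_defined ip S)
  (HSstar : is_adjoint ip S Sstar)
  (Hz : in_resolvent_set ip S z) (HRz : is_resolvent ip S z Rz)
  (Hm : (1 <= m)%N)
  (HdomS : dom_sub (op_pow S m) Abar)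
  (HdomSstar : dom_sub (op_pow Sstar m) Astar) :
  (closable ip (ad Rz Abar) /\ densely_defined ip (ad Rz Abar)) /\
  (bounded ip (ad Rz Abar) ->
     bounded ip (ad (op_pow Rz m) Abar) /\
     op_norm ip (ad (op_pow Rz m) Abar)
       <= m%:R * op_norm ip Rz ^+ (m - 1) * op_norm ip (ad Rz Abar)).
Proof.
split.
  exact: (part1 Hip Hcomplete HAbar HAstar HS HSdense HSstar HRz HdomS HdomSstar).
move=> Hb.
exact: (part2 Hip Hcomplete HAbar HAstar HS HSdense HSstar HRz HdomS HdomSstar Hb).
Qed.
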